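(* Let $n>3$, $\theta_1,\dots,\theta_n\in\mathbb R$, and let $V=|0\rangle\langle0|\otimes I_n+|1\rangle\langle1|\otimes\sum_{j=1}^ne^{i\theta_j}|j\rangle\langle j|$ on $\mathbb C^2\otimes\mathbb C^n$ (a Schmidt-rank-two bipartite unitary). (i) Suppose there exist pairwise distinct indices $i_1,i_2,i_3$ with $\sin^2\frac{\theta_{i_1}-\theta_{i_2}}{2}\sin^2\frac{\theta_{i_2}-\theta_{i_3}}{2}\sin^2\frac{\theta_{i_3}-\theta_{i_1}}{2}>0$ and non-negative reals $c_j$, $j\notin\{i_1,i_2,i_3\}$, such that the numbers $$c_{i_1}=\Big(\tfrac12\cos\tfrac{\theta_{i_2}-\theta_{i_3}}{2}-\sum_{j\ne i_1,i_2,i_3}\sin\tfrac{\theta_j-\theta_{i_2}}{2}\sin\tfrac{\theta_j-\theta_{i_3}}{2}c_j\Big)\csc\tfrac{\theta_{i_1}-\theta_{i_2}}{2}\csc\tfrac{\theta_{i_1}-\theta_{i_3}}{2},$$ $$c_{i_2}=\Big(\tfrac12\cos\tfrac{\theta_{i_1}-\theta_{i_3}}{2}-\sum_{j\ne i_1,i_2,i_3}\sin\tfrac{\theta_j-\theta_{i_1}}{2}\sin\tfrac{\theta_j-\theta_{i_3}}{2}c_j\Big)\csc\tfrac{\theta_{i_2}-\theta_{i_1}}{2}\csc\tfrac{\theta_{i_2}-\theta_{i_3}}{2},$$ $$c_{i_3}=\Big(\tfrac12\cos\tfrac{\theta_{i_1}-\theta_{i_2}}{2}-\sum_{j\ne i_1,i_2,i_3}\sin\tfrac{\theta_j-\theta_{i_1}}{2}\sin\tfrac{\theta_j-\theta_{i_2}}{2}c_j\Big)\csc\tfrac{\theta_{i_3}-\theta_{i_1}}{2}\csc\tfrac{\theta_{i_3}-\theta_{i_2}}{2}$$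 are all non-negative. Then $K_E(V)=1$ ebit. (ii) Otherwise $K_E(V)=\max_{1\le i<j\le n}h(i,j)$ ebits, where $h(i,j)=H\Big(\frac{1-|\cos\frac{\theta_i-\theta_j}{2}|}{2},\frac{1+|\cos\frac{\theta_i-\theta_j}{2}|}{2}\Big)$.
   Context: For a bipartite unitary $V$ on $\mathcal H_A\otimes\mathcal H_B$, the entangling power is $K_E(V)=\max E\big(V(|\phi\rangle_{AR_A}\otimes|\psi\rangle_{BR_B})\big)$, the maximum over pure states on $AR_A$ and $BR_B$ with arbitrary finite-dimensional ancillas $R_A,R_B$ ($V$ acting on $A,B$), where $E(|\chi\rangle)=S(\mathrm{Tr}_{AR_A}|\chi\rangle\langle\chi|)$ is the von Neumann entropy, base-2 logarithm (ebits). $H(p,1-p)=-p\log_2p-(1-p)\log_2(1-p)$. *)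

(* Defs.v *)
From HB Require Import structures.
From mathcomp Require Import all_boot all_order all_algebra.
From mathcomp Require Import reals exp trigo.
From mathcomp Require Import complex.
Set Implicit Arguments. Unset Strict Implicit. Unset Printing Implicit Defensive.
Import Order.TTheory GRing.Theory Num.Theory.
Local Open Scope ring_scope.
Local Open Scope complex_scope.

Section QInfo.
Variable R : realType.

Definition log2 (x : R) : R := ln x / ln 2.
Definition xlog2x (x : R) : R := if x == 0 then 0 else x * log2 x.

Definition shannon (I : finType) (p : I -> R) : R := - \sum_(k : I) xlog2x (p k).

Definition H2 (p q : R) : R := - (xlog2x p + xlog2x q).

Definition unit_vec (I : finType) (v : I -> R[i]) : Prop :=
  \sum_(k : I) v k * (v k)^* = 1.

(* A spectral decomposition of an operator rho (given by its matrix entries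
   rho i j in an orthonormal basis indexed by I): an orthonormal basis of
   eigenvectors u k with real eigenvalues lam k, rho = sum_k lam_k |u_k><u_k|. *)
Definition spectral_decomp (I : finType) (rho : I -> I -> R[i])
  (lam : I -> R) (u : I -> I -> R[i]) : Prop :=
  (forall k l : I, \sum_(i : I) (u k i)^* * u l i = (k == l)%:R) /\
  (forall i j : I, rho i j = \sum_(k : I) (lam k)%:C * u k i * (u k j)^*).

(* von Neumann entropy (base 2): S(rho) = -sum_k lam_k log2 lam_k over the
   eigenvalues of rho.  Stated as a relation "S(rho) = s". *)
Definition vN_entropy (I : finType) (rho : I -> I -> R[i]) (s : R) : Prop :=
  exists (lam : I -> R) (u : I -> I -> R[i]),
    spectral_decomp rho lam u /\ s = shannon lam.

(* A bipartite operator on C^dA (x) C^dB, given by its matrix entries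
   V (x,y) (x',y') = <x,y| V |x',y'>. *)
Definition bip_op (dA dB : nat) := ('I_dA * 'I_dB)%type -> ('I_dA * 'I_dB)%type -> R[i].

(* Output state chi = V (|phi>_{A R_A} (x) |psi>_{B R_B}), V acting on A,B;
   amplitude <x,r,y,s|chi> *)
Definition out_state (dA dB a b : nat) (V : bip_op dA dB)
  (phi : ('I_dA * 'I_a)%type -> R[i]) (psi : ('I_dB * 'I_b)%type -> R[i])
  (x : 'I_dA) (r : 'I_a) (y : 'I_dB) (s : 'I_b) : R[i] :=
  \sum_(x' : 'I_dA) \sum_(y' : 'I_dB) V (x, y) (x', y') * phi (x', r) * psi (y', s).

(* Reduced state Tr_{A R_A} |chi><chi| on B R_B *)
Definition reduced_BRB (dA dB a b : nat) (V : bip_op dA dB)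
  (phi : ('I_dA * 'I_a)%type -> R[i]) (psi : ('I_dB * 'I_b)%type -> R[i])
  (ys ys' : ('I_dB * 'I_b)%type) : R[i] :=
  \sum_(x : 'I_dA) \sum_(r : 'I_a)
     out_state V phi psi x r ys.1 ys.2 * (out_state V phi psi x r ys'.1 ys'.2)^*.

(* e is the entanglement E of some output V(|phi>|psi>) with finite-dim ancillas *)
Definition achievable_ent (dA dB : nat) (V : bip_op dA dB) (e : R) : Prop :=
  exists (a b : nat) (phi : ('I_dA * 'I_a)%type -> R[i]) (psi : ('I_dB * 'I_b)%type -> R[i]),
    unit_vec phi /\ unit_vec psi /\ vN_entropy (reduced_BRB V phi psi) e.

(* K_E(V) = k : the maximum of the achievable entanglements is k
   (attained, and an upper bound). *)
Definition entangling_power_is (dA dB : nat) (V : bip_op dA dB) (k : R) : Prop :=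
  achievable_ent V k /\ (forall e, achievable_ent V e -> e <= k).

(* V = |0><0| (x) I_n + |1><1| (x) sum_j e^{i theta_j} |j><j| on C^2 (x) C^n *)
Definition V_ctrl_phase (n : nat) (theta : 'I_n -> R) : bip_op 2 n :=
  fun xy xy' =>
    if (xy.1 == xy'.1) && (xy.2 == xy'.2) then
      (if xy.1 == ord0 then 1 else cos (theta xy.2) +i* sin (theta xy.2))
    else 0.

Definition h_ij (ti tj : R) : R :=
  H2 ((1 - `|cos ((ti - tj) / 2)|) / 2) ((1 + `|cos ((ti - tj) / 2)|) / 2).

Definition csc (x : R) : R := (sin x)^-1.

(* The numbers c_{i1} (and, by permuting the arguments, c_{i2}, c_{i3}) *)
Definition c_formula (n : nat) (theta : 'I_n -> R) (c : 'I_n -> R)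
  (i1 i2 i3 : 'I_n) : R :=
  (cos ((theta i2 - theta i3) / 2) / 2
   - \sum_(j < n | (j != i1) && (j != i2) && (j != i3))
        sin ((theta j - theta i2) / 2) * sin ((theta j - theta i3) / 2) * c j)
  * csc ((theta i1 - theta i2) / 2) * csc ((theta i1 - theta i3) / 2).

Definition cond_i (n : nat) (theta : 'I_n -> R) : Prop :=
  exists i1 i2 i3 : 'I_n,
    [/\ i1 != i2, i2 != i3 & i1 != i3] /\
    0 < sin ((theta i1 - theta i2) / 2) ^+ 2 * sin ((theta i2 - theta i3) / 2) ^+ 2
        * sin ((theta i3 - theta i1) / 2) ^+ 2 /\
    exists c : 'I_n -> R,
      (forall j : 'I_n, (j != i1) && (j != i2) && (j != i3) -> 0 <= c j) /\
      0 <= c_formula theta c i1 i2 i3 /\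
      0 <= c_formula theta c i2 i1 i3 /\
      0 <= c_formula theta c i3 i1 i2.

End QInfo.

(* Main.v *)
Require Import Defs.
From HB Require Import structures.
From mathcomp Require Import all_boot all_order all_algebra.
From mathcomp Require Import reals exp trigo.
From mathcomp Require Import complex.
From mathcomp Require Import sesquilinear spectral.
From mathcomp Require Import ring lra.
Import Order.TTheory GRing.Theory Num.Theory.
Local Open Scope ring_scope.
Set Implicit Arguments. Unset Strict Implicit. Unset Printing Implicit Defensive.
Section Gen.
Variable K : comRingType.
Variables (I M : finType) (F G : M -> I -> K).

Lemma gen_trace : \sum_i \sum_m F m i * G m i = \sum_m \sum_i F m i * G m i.
Proof. exact: exchange_big. Qed.

Lemma gen_sandwich (X Y : I -> K) :
  \sum_i \sum_j X i * (\sum_m F m i * G m j) * Y j =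
  \sum_m (\sum_i X i * F m i) * (\sum_j G m j * Y j).
Proof.
transitivity (\sum_i \sum_j \sum_m X i * F m i * (G m j * Y j)).
  apply: eq_bigr => i _; apply: eq_bigr => j _.
  rewrite mulr_sumr mulr_suml; apply: eq_bigr => m _; ring.
transitivity (\sum_i \sum_m \sum_j X i * F m i * (G m j * Y j)).
  apply: eq_bigr => i _; exact: exchange_big.
rewrite exchange_big; apply: eq_bigr => m _.
rewrite mulr_suml; apply: eq_bigr => i _; by rewrite mulr_sumr.
Qed.

Lemma gen_square :
  \sum_i \sum_j (\sum_m F m i * G m j) * (\sum_m F m j * G m i) =
  \sum_m \sum_m' (\sum_i F m i * G m' i) * (\sum_j F m' j * G m j).
Proof.
transitivity (\sum_i \sum_j \sum_m \sum_m' (F m i * G m' i) * (F m' j * G m j)).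
  apply: eq_bigr => i _; apply: eq_bigr => j _.
  rewrite mulr_suml; apply: eq_bigr => m _.
  rewrite mulr_sumr; apply: eq_bigr => m' _; ring.
transitivity (\sum_i \sum_m \sum_m' \sum_j (F m i * G m' i) * (F m' j * G m j)).
  apply: eq_bigr => i _.
  rewrite exchange_big; apply: eq_bigr => m _; exact: exchange_big.
rewrite exchange_big; apply: eq_bigr => m _.
rewrite exchange_big; apply: eq_bigr => m' _.
rewrite mulr_suml; apply: eq_bigr => i _; by rewrite mulr_sumr.
Qed.
End Gen.
Section Main.
Variable R : realType.
Local Notation C := R[i].
Variable n : nat.
Variable theta : 'I_n -> R.

Lemma ln2_gt0 : 0 < ln (2:R).
Proof. apply: ln_gt0; lra. Qed.

Lemma xlog2xE (x : R) : xlog2x x = x * ln x / ln 2.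
Proof.
rewrite /xlog2x /log2; case: eqP => [->|_]; first by rewrite !mul0r.
by rewrite mulrA.
Qed.

Lemma H2E (a b : R) : H2 a b = - (a * ln a + b * ln b) / ln 2.
Proof. by rewrite /H2 !xlog2xE -mulrDl mulNr. Qed.

Lemma H2C (a b : R) : H2 a b = H2 b a.
Proof. by rewrite /H2 addrC. Qed.

Lemma ln_le_sub1 (y : R) : 0 < y -> ln y <= y - 1.
Proof.
move=> y0; have := @le_ln1Dx R (y - 1); rewrite addrCA subrr addr0; apply; lra.
Qed.

Lemma tangent (x y : R) : 0 <= x -> 0 < y ->
  (ln y + 1) * (x - y) <= x * ln x - y * ln y.
Proof.
move=> x0 y0; have [->|xn0] := eqVneq x 0.
  rewrite mul0r; lra.
have xp : 0 < x by rewrite lt_def xn0.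
have := @ln_le_sub1 (y / x) (divr_gt0 y0 xp).
rewrite ln_div ?posrE // => h.
have : x * (ln y - ln x) <= x * (y / x - 1) by rewrite ler_wpM2l // ltW.
have e : x * (y / x) = y by rewrite mulrCA divff ?mulr1 // gt_eqF.
move=> h2; nra.
Qed.

Lemma H2_mono (a b a' b' : R) : 0 <= a -> 0 <= b -> 0 <= a' -> 0 <= b' ->
  a + b = 1 -> a' + b' = 1 -> a * b <= a' * b' -> H2 a b <= H2 a' b'.
Proof.
wlog ab : a b / a <= b.
  move=> W a0 b0 a0' b0' s s' p; have [ab|ba] := leP a b; first exact: W.
  rewrite H2C; apply: W => //; try lra; by rewrite mulrC.
wlog ab' : a' b' / a' <= b'.
  move=> W a0 b0 a0' b0' s s' p; have [ab'|ba'] := leP a' b'; first exact: W.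
  rewrite (H2C a'); apply: W => //; try lra; by rewrite mulrC.
move=> a0 b0 a0' b0' s s' p.
have aa' : a <= a'.
  rewrite leNgt; apply/negP => h.
  have eb : b = 1 - a by lra.
  have eb' : b' = 1 - a' by lra.
  rewrite eb eb' in p; nra.
rewrite !H2E ler_pM2r ?invr_gt0 ?ln2_gt0 // lerN2.
have [a'0|a'0] := eqVneq a' 0.
  have -> : a = a' by lra.
  have -> : b = b' by lra.
  by [].
have a'p : 0 < a' by rewrite lt_def a'0.
have b'p : 0 < b' by lra.
have t1 := @tangent a a' a0 a'p.
have t2 := @tangent b b' b0 b'p.
have lnab : ln a' <= ln b' by rewrite ler_ln ?posrE.
have eb : b - b' = a' - a by lra.
rewrite eb in t2.
have : 0 <= (a' - a) * (ln b' - ln a') by apply: mulr_ge0; lra.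
nra.
Qed.

Lemma H2_half : H2 (1/2) (1/2) = (1 : R).
Proof.
rewrite H2E -mulrDl.
have -> : (1/2 + 1/2 : R) = 1 by lra.
rewrite mul1r div1r lnV ?posrE //.
have := ln2_gt0; move: (ln (2:R)) => l l0.
rewrite opprK divff //; by rewrite gt_eqF.
Qed.

Local Open Scope complex_scope. Local Open Scope ring_scope.

Definition nsq (z : C) : R := complex.Re z ^+ 2 + complex.Im z ^+ 2.

Lemma conjE (z : C) : z^* = conjc z.
Proof. by []. Qed.

Lemma nsqE (z : C) : z * z^* = (nsq z)%:C.
Proof.
rewrite conjE; case: z => a b; rewrite /nsq /=.
apply/eqP; rewrite eq_complex /=; apply/andP; split; apply/eqP; ring.
Qed.

Lemma nsq_ge0 z : 0 <= nsq z.
Proof. by rewrite /nsq addr_ge0 // sqr_ge0. Qed.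

Lemma realC_inj (x y : R) : x%:C = y%:C -> x = y.
Proof. by move=> /(congr1 (@complex.Re R)). Qed.


Lemma cK (z : C) : z^*^* = z.
Proof. exact: conjCK. Qed.

Lemma cM (x y : C) : (x * y)^* = x^* * y^*.
Proof. exact: rmorphM. Qed.

Lemma cS (I : finType) (P : pred I) (f : I -> C) : (\sum_(i | P i) f i)^* = \sum_(i | P i) (f i)^*.
Proof. exact: rmorph_sum. Qed.

Lemma cS' (I : finType) (f : I -> C) : (\sum_i f i)^* = \sum_i (f i)^*.
Proof. exact: rmorph_sum. Qed.


Definition eth (y : 'I_n) : C := cos (theta y) +i* sin (theta y).

Lemma eth_unit y : eth y * (eth y)^* = 1.
Proof.
rewrite nsqE /nsq /= cos2Dsin2 //.
Qed.

Definition W (x : 'I_2) (y : 'I_n) : C := if x == ord0 then 1 else eth y.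

Lemma W_unit x y : W x y * (W x y)^* = 1.
Proof. rewrite /W; case: ifP => _; [by rewrite rmorph1 mulr1 | exact: eth_unit]. Qed.

Lemma out_stateE a b (phi : ('I_2 * 'I_a)%type -> C) (psi : ('I_n * 'I_b)%type -> C) x r y s :
  out_state (V_ctrl_phase theta) phi psi x r y s = W x y * phi (x, r) * psi (y, s).
Proof.
rewrite /out_state (bigD1 x) //= [X in _ + X]big1 ?addr0; last first.
  move=> x' /negPf nx; apply: big1 => y' _.
  by rewrite /V_ctrl_phase /= eq_sym nx /= !mul0r.
rewrite (bigD1 y) //= [X in _ + X]big1 ?addr0; last first.
  move=> y' /negPf ny; by rewrite /V_ctrl_phase /= eqxx eq_sym ny /= !mul0r.
by rewrite /V_ctrl_phase /= !eqxx.
Qed.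


Definition Pc a (phi : ('I_2 * 'I_a)%type -> C) (x : 'I_2) : C :=
  \sum_(r : 'I_a) phi (x, r) * (phi (x, r))^*.


Lemma reducedE a b (phi : ('I_2 * 'I_a)%type -> C) (psi : ('I_n * 'I_b)%type -> C) i j :
  reduced_BRB (V_ctrl_phase theta) phi psi i j =
  \sum_(x : 'I_2) (Pc phi x * W x i.1 * psi i) * (W x j.1 * psi j)^*.
Proof.
rewrite /reduced_BRB; apply: eq_bigr => x _.
rewrite /Pc !mulr_suml; apply: eq_bigr => r _.
rewrite !out_stateE !cM.
case: i => i1 i2; case: j => j1 j2 /=; ring.
Qed.


Lemma sum_delta (I : finType) (k : I) (f : I -> C) :
  \sum_m (k == m)%:R * f m = f k.
Proof.
rewrite (bigD1 k) //= eqxx mul1r big1 ?addr0 // => m /negPf.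
by rewrite eq_sym => ->; rewrite mul0r.
Qed.

Lemma conj_natb (b : bool) : ((b%:R : C)^*) = b%:R.
Proof. by case: b; rewrite ?rmorph1 ?rmorph0. Qed.

Lemma det_zero (K : comRingType) (P0 P1 a1 a2 a3 b1 b2 b3 c1 c2 c3 d1 d2 d3 : K) :
  let M := fun (a b c d : K) => P0 * a * b + P1 * c * d in
  M a1 b1 c1 d1 * (M a2 b2 c2 d2 * M a3 b3 c3 d3 - M a2 b3 c2 d3 * M a3 b2 c3 d2)
  - M a1 b2 c1 d2 * (M a2 b1 c2 d1 * M a3 b3 c3 d3 - M a2 b3 c2 d3 * M a3 b1 c3 d1)
  + M a1 b3 c1 d3 * (M a2 b1 c2 d1 * M a3 b2 c3 d2 - M a2 b2 c2 d2 * M a3 b1 c3 d1) = 0.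
Proof. move=> M; rewrite /M; ring. Qed.

Lemma rCsum (I : finType) (f : I -> R) : (\sum_i f i)%:C = \sum_i (f i)%:C.
Proof. exact: rmorph_sum. Qed.
Lemma rCM (x y : R) : (x * y)%:C = x%:C * y%:C.
Proof. exact: rmorphM. Qed.
Lemma rCD (x y : R) : (x + y)%:C = x%:C + y%:C.
Proof. exact: rmorphD. Qed.

Section Core.
Variables (a b : nat) (phi : ('I_2 * 'I_a)%type -> C) (psi : ('I_n * 'I_b)%type -> C).
Variables (lam : ('I_n * 'I_b)%type -> R) (u : ('I_n * 'I_b)%type -> ('I_n * 'I_b)%type -> C).
Hypothesis hsp : spectral_decomp (reduced_BRB (V_ctrl_phase theta) phi psi) lam u.

Let rho := reduced_BRB (V_ctrl_phase theta) phi psi.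

Definition alpha k (x : 'I_2) : C := \sum_i (u k i)^* * (W x i.1 * psi i).

Lemma orth k l : \sum_i (u k i)^* * u l i = (k == l)%:R.
Proof. by case: hsp. Qed.

Lemma orth' k l : \sum_i u k i * (u l i)^* = (l == k)%:R.
Proof. by rewrite -orth; apply: eq_bigr => i _; rewrite mulrC. Qed.

Lemma orth1 k : \sum_i u k i * (u k i)^* = 1.
Proof. by rewrite orth' eqxx. Qed.

Lemma rho_dec i j : rho i j = \sum_m ((lam m)%:C * u m i) * (u m j)^*.
Proof. by rewrite /rho; case: hsp => _ ->. Qed.

Lemma E1 k l : (lam k)%:C * (k == l)%:R = \sum_x Pc phi x * alpha k x * (alpha l x)^*.
Proof.
have S1 : \sum_i \sum_j (u k i)^* * rho i j * u l j = (lam k)%:C * (k == l)%:R.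
  under eq_bigr do under eq_bigr do rewrite rho_dec.
  rewrite gen_sandwich.
  under eq_bigr => m _.
    rewrite orth.
    have -> : \sum_i (u k i)^* * ((lam m)%:C * u m i) = (lam m)%:C * (k == m)%:R.
      by rewrite -orth mulr_sumr; apply: eq_bigr => i _; ring.
    over.
  rewrite (eq_bigr (fun m => (k == m)%:R * ((lam m)%:C * (m == l)%:R))); last by move=> m _; ring.
  by rewrite sum_delta.
rewrite -S1.
under eq_bigr do under eq_bigr do rewrite /rho reducedE.
rewrite gen_sandwich; apply: eq_bigr => x _.
congr (_ * _).
  rewrite /alpha mulr_sumr; apply: eq_bigr => i _; ring.
rewrite /alpha cS'; apply: eq_bigr => j _; rewrite !cM cK; ring.
Qed.


Lemma rho_red i j : rho i j = \sum_x (Pc phi x * W x i.1 * psi i) * (W x j.1 * psi j)^*.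
Proof. exact: reducedE. Qed.

Hypothesis hphi : unit_vec phi.
Hypothesis hpsi : unit_vec psi.

Lemma Pc_sum : \sum_x Pc phi x = 1.
Proof.
rewrite -hphi /Pc pair_big; apply: eq_bigr => -[x r] _ //.
Qed.

Lemma trace_lam : \sum_k (lam k)%:C = 1.
Proof.
have T1 : \sum_i rho i i = \sum_k (lam k)%:C.
  under eq_bigr do rewrite rho_dec.
  rewrite gen_trace; apply: eq_bigr => m _.
  rewrite -[RHS]mulr1 -(orth1 m) mulr_sumr; apply: eq_bigr => i _; ring.
rewrite -T1.
under eq_bigr do rewrite rho_red.
rewrite gen_trace -Pc_sum; apply: eq_bigr => x _.
rewrite -[RHS]mulr1 -hpsi mulr_sumr; apply: eq_bigr => i _.
have := W_unit x i.1; rewrite cM => h.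
transitivity (Pc phi x * (psi i * (psi i)^*) * (W x i.1 * (W x i.1)^*)); first ring.
by rewrite h mulr1.
Qed.


Definition gsum : C := \sum_i eth i.1 * (psi i * (psi i)^*).

Definition gam (x x' : 'I_2) : C := \sum_i W x i.1 * (W x' i.1)^* * (psi i * (psi i)^*).

Lemma sum2 (f : 'I_2 -> C) : \sum_x f x = f ord0 + f ord_max.
Proof.
rewrite !big_ord_recl big_ord0 addr0; congr (_ + f _); exact: val_inj.
Qed.

Lemma W0 y : W ord0 y = 1. Proof. by []. Qed.
Lemma W1 y : W ord_max y = eth y. Proof. by []. Qed.

Lemma gam00 : gam ord0 ord0 = 1.
Proof. rewrite -hpsi; apply: eq_bigr => i _; rewrite !W0 rmorph1; ring. Qed.

Lemma gam11 : gam ord_max ord_max = 1.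
Proof.
rewrite -hpsi; apply: eq_bigr => i _; rewrite !W1.
have := eth_unit i.1 => h.
transitivity (eth i.1 * (eth i.1)^* * (psi i * (psi i)^*)); first by [].
by rewrite h mul1r.
Qed.

Lemma gam10 : gam ord_max ord0 = gsum.
Proof. apply: eq_bigr => i _; rewrite W1 W0 rmorph1 mulr1 //. Qed.

Lemma gam01 : gam ord0 ord_max = gsum^*.
Proof.
rewrite /gsum cS'; apply: eq_bigr => i _; rewrite W1 W0 !cM cK; ring.
Qed.

Lemma square_lam : \sum_k (lam k)%:C * (lam k)%:C =
  Pc phi ord0 * Pc phi ord0 + Pc phi ord_max * Pc phi ord_max
  + 2 * Pc phi ord0 * Pc phi ord_max * (gsum * gsum^*).
Proof.
have T1 : \sum_i \sum_j rho i j * rho j i = \sum_k (lam k)%:C * (lam k)%:C.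
  under eq_bigr do under eq_bigr do rewrite !rho_dec.
  rewrite gen_square; apply: eq_bigr => m _.
  under eq_bigr => m' _.
    have -> : \sum_i (lam m)%:C * u m i * (u m' i)^* = (lam m)%:C * (m' == m)%:R.
      by rewrite -orth' mulr_sumr; apply: eq_bigr => i _; ring.
    have -> : \sum_j (lam m')%:C * u m' j * (u m j)^* = (lam m')%:C * (m == m')%:R.
      by rewrite -orth' mulr_sumr; apply: eq_bigr => i _; ring.
    over.
  rewrite /= (eq_bigr (fun m' => (m == m')%:R * ((lam m)%:C * (lam m')%:C * (m' == m)%:R))).
    by rewrite sum_delta eqxx mulr1.
  by move=> m' _; ring.
rewrite -T1.
under eq_bigr do under eq_bigr do rewrite !rho_red.
rewrite gen_square.
have inner : forall x x', \sum_i Pc phi x * W x i.1 * psi i * (W x' i.1 * psi i)^* = Pc phi x * gam x x'.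
  move=> x x'; rewrite /gam mulr_sumr; apply: eq_bigr => i _; rewrite cM; ring.
under eq_bigr do under eq_bigr do rewrite !inner.
rewrite !sum2 gam00 gam11 gam10 gam01; ring.
Qed.


Definition pp (x : 'I_2) : R := \sum_r nsq (phi (x, r)).

Lemma PcE x : Pc phi x = (pp x)%:C.
Proof. rewrite /Pc /pp rCsum; apply: eq_bigr => r _; exact: nsqE. Qed.

Lemma pp_ge0 x : 0 <= pp x.
Proof. by apply: sumr_ge0 => r _; exact: nsq_ge0. Qed.

Lemma pp_sum : pp ord0 + pp ord_max = 1.
Proof. apply: realC_inj; by rewrite rCD -!PcE -sum2 Pc_sum. Qed.

Lemma lam_ge0 k : 0 <= lam k.
Proof.
have := E1 k k; rewrite eqxx mulr1.
under eq_bigr do rewrite PcE -mulrA nsqE -rCM.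
rewrite -rCsum => /realC_inj ->.
by apply: sumr_ge0 => x _; apply: mulr_ge0; [exact: pp_ge0 | exact: nsq_ge0].
Qed.

Lemma Mkl k l : Pc phi ord0 * alpha k ord0 * (alpha l ord0)^* +
  Pc phi ord_max * alpha k ord_max * (alpha l ord_max)^* = (lam k)%:C * (k == l)%:R.
Proof. by rewrite E1 sum2. Qed.

Lemma lam_triple k1 k2 k3 : k1 != k2 -> k1 != k3 -> k2 != k3 ->
  lam k1 * lam k2 * lam k3 = 0.
Proof.
move=> /negPf n12 /negPf n13 /negPf n23.
have := @det_zero _ (Pc phi ord0) (Pc phi ord_max)
  (alpha k1 ord0) (alpha k2 ord0) (alpha k3 ord0)
  (alpha k1 ord0)^* (alpha k2 ord0)^* (alpha k3 ord0)^*
  (alpha k1 ord_max) (alpha k2 ord_max) (alpha k3 ord_max)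
  (alpha k1 ord_max)^* (alpha k2 ord_max)^* (alpha k3 ord_max)^*.
rewrite /= !Mkl !eqxx n12 n13 n23 !(eq_sym k2 k1) !(eq_sym k3 k1) !(eq_sym k3 k2) n12 n13 n23.
rewrite !mulr0 !mulr1 !subr0 !mul0r !subr0 !addr0.
move=> h; apply: realC_inj; by rewrite !rCM -mulrA h.
Qed.

End Core.

Section Comb.
Variables (I : finType) (lm : I -> R).

Lemma sum_two (f : R -> R) k1 k2 : f 0 = 0 -> k1 != k2 ->
  (forall k, k != k1 -> k != k2 -> lm k = 0) ->
  \sum_k f (lm k) = f (lm k1) + f (lm k2).
Proof.
move=> f0 n12 z; rewrite (bigD1 k1) //= (bigD1 k2) /=; last by rewrite eq_sym.
rewrite big1 ?addr0 // => k /andP[nk2 nk1]; by rewrite z.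
Qed.

Lemma sum_one (f : R -> R) k1 : f 0 = 0 ->
  (forall k, k != k1 -> lm k = 0) -> \sum_k f (lm k) = f (lm k1).
Proof.
move=> f0 z; rewrite (bigD1 k1) //= big1 ?addr0 // => k nk; by rewrite z.
Qed.

Lemma xlog2x0 : xlog2x (0 : R) = 0.
Proof. by rewrite /xlog2x eqxx. Qed.

Lemma comb : (forall k, 0 <= lm k) -> \sum_k lm k = 1 ->
  (forall k1 k2 k3, k1 != k2 -> k1 != k3 -> k2 != k3 -> lm k1 * lm k2 * lm k3 = 0) ->
  exists l1 l2, [/\ 0 <= l1, 0 <= l2, l1 + l2 = 1,
    \sum_k lm k * lm k = l1 * l1 + l2 * l2 & shannon lm = H2 l1 l2].
Proof.
move=> ge0 s1 tri.
case: (pickP (fun k => lm k != 0)) => [k1 nz1|all0]; last first.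
  exfalso; move: s1; rewrite big1 => [|k _]; last by move: (all0 k) => /= /negbFE/eqP.
  move=> h; have : (0 : R) != 1 by rewrite eq_sym oner_neq0.
  by rewrite h eqxx.
have sh : forall l : I -> R, shannon l = - \sum_k xlog2x (l k) by [].
case: (pickP (fun k => (k != k1) && (lm k != 0))) => [k2 /andP[n21 nz2]|none].
  have z : forall k, k != k1 -> k != k2 -> lm k = 0.
    move=> k nk1 nk2; have := tri k1 k2 k; rewrite eq_sym n21 eq_sym nk1 eq_sym nk2.
    move=> /(_ isT isT isT) /eqP; rewrite !mulf_eq0 (negPf nz1) (negPf nz2) /= => /eqP //.
  exists (lm k1), (lm k2); split => //.
  - by rewrite -(@sum_two id k1 k2) //; rewrite eq_sym.
  - by rewrite (@sum_two (fun x => x * x) k1 k2) ?mul0r // eq_sym.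
  - by rewrite sh (@sum_two (@xlog2x R) k1 k2) ?xlog2x0 // eq_sym.
have z : forall k, k != k1 -> lm k = 0.
  by move=> k nk; move: (none k) => /= /negbT; rewrite negb_and nk /= negbK => /eqP.
have l1 : lm k1 = 1 by rewrite -s1 (@sum_one id k1).
exists (lm k1), 0; split => //.
- by rewrite addr0.
- by rewrite (@sum_one (fun x => x * x) k1) ?mul0r ?mulr0 ?addr0.
- by rewrite sh (@sum_one (@xlog2x R) k1) ?xlog2x0 // /H2 xlog2x0 addr0.
Qed.
End Comb.

Lemma rC2 : ((2 : R)%:C) = 2.
Proof. exact: rmorph_nat. Qed.

Lemma entropy_formula a b (phi : ('I_2 * 'I_a)%type -> C) (psi : ('I_n * 'I_b)%type -> C) e :
  unit_vec phi -> unit_vec psi ->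
  vN_entropy (reduced_BRB (V_ctrl_phase theta) phi psi) e ->
  exists l1 l2, [/\ 0 <= l1, 0 <= l2, l1 + l2 = 1,
    l1 * l2 = pp phi ord0 * pp phi ord_max * (1 - nsq (gsum psi)) & e = H2 l1 l2].
Proof.
move=> hphi hpsi [lam [u [hsp ->]]].
have s1 : \sum_k lam k = 1.
  apply: realC_inj; rewrite rCsum; exact: (trace_lam hsp hphi hpsi).
have sq : \sum_k lam k * lam k = pp phi ord0 * pp phi ord0 + pp phi ord_max * pp phi ord_max
   + 2 * pp phi ord0 * pp phi ord_max * nsq (gsum psi).
  apply: realC_inj; rewrite rCsum; under eq_bigr do rewrite rCM.
  rewrite (square_lam hsp hpsi) !PcE nsqE !rCD !rCM rC2 //; by rewrite /nsq !rCD !rCM.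
have [l1 [l2 [h1 h2 h3 h4 h5]]] := comb (lam_ge0 hsp) s1 (lam_triple hsp).
have hp := pp_sum hphi.
exists l1, l2; split => //.
rewrite sq in h4.
have e1 : pp phi ord_max = 1 - pp phi ord0 by lra.
have e2 : l2 = 1 - l1 by lra.
rewrite e1 e2; rewrite e1 e2 in h4; nra.
Qed.

Lemma ReD (x y : C) : complex.Re (x + y) = complex.Re x + complex.Re y.
Proof. by case: x; case: y. Qed.
Lemma ImD (x y : C) : complex.Im (x + y) = complex.Im x + complex.Im y.
Proof. by case: x; case: y. Qed.

Lemma ReS (I : finType) (f : I -> C) : complex.Re (\sum_i f i) = \sum_i complex.Re (f i).
Proof. exact: (big_morph _ ReD). Qed.
Lemma ImS (I : finType) (f : I -> C) : complex.Im (\sum_i f i) = \sum_i complex.Im (f i).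
Proof. exact: (big_morph _ ImD). Qed.

Lemma rC1 : ((1 : R)%:C) = 1.
Proof. exact: rmorph1. Qed.

Definition qv b (psi : ('I_n * 'I_b)%type -> C) (y : 'I_n) : R := \sum_s nsq (psi (y, s)).

Definition Xq (q : 'I_n -> R) := \sum_y q y * cos (theta y).
Definition Yq (q : 'I_n -> R) := \sum_y q y * sin (theta y).

Lemma gsum_nsq b (psi : ('I_n * 'I_b)%type -> C) :
  nsq (gsum psi) = Xq (qv psi) ^+ 2 + Yq (qv psi) ^+ 2.
Proof.
have -> : gsum psi = \sum_y (qv psi y * cos (theta y)) +i* (qv psi y * sin (theta y)).
  have -> : gsum psi = \sum_y \sum_s eth y * (psi (y, s) * (psi (y, s))^*).
    by rewrite pair_bigA; apply: eq_bigr => -[y s] _.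
  apply: eq_bigr => y _.
  have -> : \sum_s eth y * (psi (y, s) * (psi (y, s))^*) = eth y * (qv psi y)%:C.
    rewrite /qv rCsum mulr_sumr; apply: eq_bigr => s _; by rewrite nsqE.
  rewrite /eth; move: (qv psi y) => qq.
  apply/eqP; rewrite eq_complex /=; apply/andP; split; apply/eqP; ring.
by rewrite /nsq ReS ImS.
Qed.

Lemma qv_ge0 b (psi : ('I_n * 'I_b)%type -> C) y : 0 <= qv psi y.
Proof. by apply: sumr_ge0 => s _; exact: nsq_ge0. Qed.

Lemma qv_sum b (psi : ('I_n * 'I_b)%type -> C) : unit_vec psi -> \sum_y qv psi y = 1.
Proof.
move=> h; apply: realC_inj; rewrite rC1 -h rCsum.
have -> : \sum_k psi k * (psi k)^* = \sum_y \sum_s psi (y, s) * (psi (y, s))^*.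
  by rewrite pair_bigA; apply: eq_bigr => -[y s] _.
apply: eq_bigr => y _.
rewrite /qv rCsum; apply: eq_bigr => s _; by rewrite nsqE.
Qed.

Definition xh k := cos (theta k / 2).
Definition yh k := sin (theta k / 2).

Lemma unit_h k : xh k ^+ 2 + yh k ^+ 2 = 1.
Proof. exact: cos2Dsin2. Qed.

Lemma half_diff (u v : R) : (u - v) / 2 = u / 2 - v / 2.
Proof. by rewrite mulrBl. Qed.

Lemma Sd a b : sin ((theta a - theta b) / 2) = yh a * xh b - xh a * yh b.
Proof. by rewrite half_diff sinB. Qed.

Lemma Cd a b : cos ((theta a - theta b) / 2) = xh a * xh b + yh a * yh b.
Proof. by rewrite half_diff cosB. Qed.

Lemma th2 k : theta k = (theta k / 2) *+ 2.
Proof. by rewrite -mulr_natr -mulrA mulVf ?mulr1 // pnatr_eq0. Qed.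

Lemma cosT k : cos (theta k) = xh k ^+ 2 - yh k ^+ 2.
Proof.
rewrite {1}th2 cos_mulr2n -/(xh k); have := unit_h k; lra.
Qed.

Lemma sinT k : sin (theta k) = 2 * xh k * yh k.
Proof. rewrite {1}th2 sin_mulr2n -/(xh k) -/(yh k); lra. Qed.

Lemma csc_inv (x : R) : csc x = (sin x)^-1. Proof. by []. Qed.

Section Interp.
Variables (i1 i2 i3 : 'I_n) (c : 'I_n -> R) (al be ga : R).
Hypotheses (d12 : i1 != i2) (d23 : i2 != i3) (d13 : i1 != i3).
Hypotheses (s12 : yh i1 * xh i2 - xh i1 * yh i2 != 0)
  (s23 : yh i2 * xh i3 - xh i2 * yh i3 != 0)
  (s13 : yh i1 * xh i3 - xh i1 * yh i3 != 0).

Definition qc k := if k == i1 then c_formula theta c i1 i2 i3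
  else if k == i2 then c_formula theta c i2 i1 i3
  else if k == i3 then c_formula theta c i3 i1 i2 else c k.

Definition Qf k := al * xh k ^+ 2 + be * (xh k * yh k) + ga * yh k ^+ 2.

Let P j := (j != i1) && (j != i2) && (j != i3).

Lemma interp_id : \sum_k qc k * Qf k = (al + ga) / 2.
Proof.
have n21 : i2 != i1 by rewrite eq_sym.
have n31 : i3 != i1 by rewrite eq_sym.
have n32 : i3 != i2 by rewrite eq_sym.
rewrite (bigD1 i1) //= (bigD1 i2) /= ?n21 //.
rewrite (bigD1 i3) /= ?n31 ?n32 //.
rewrite (eq_bigl P); last first.
  by move=> k; rewrite /P; case: (k != i1); case: (k != i2); case: (k != i3).
have -> : \sum_(k | P k) qc k * Qf k = \sum_(k | P k) c k * Qf k.
  apply: eq_bigr => k /andP[/andP[n1 n2] n3].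
  by rewrite /qc (negPf n1) (negPf n2) (negPf n3).
rewrite /qc eqxx (negPf n21) (negPf n31) (negPf n32) !eqxx.
rewrite /c_formula.
have e2 : \sum_(j < n | (j != i2) && (j != i1) && (j != i3))
    sin ((theta j - theta i1) / 2) * sin ((theta j - theta i3) / 2) * c j =
  \sum_(j < n | P j) sin ((theta j - theta i1) / 2) * sin ((theta j - theta i3) / 2) * c j.
  by apply: eq_bigl => k; rewrite /P; case: (k != i1); case: (k != i2); case: (k != i3).
have e3 : \sum_(j < n | (j != i3) && (j != i1) && (j != i2))
    sin ((theta j - theta i1) / 2) * sin ((theta j - theta i2) / 2) * c j =
  \sum_(j < n | P j) sin ((theta j - theta i1) / 2) * sin ((theta j - theta i2) / 2) * c j.
  by apply: eq_bigl => k; rewrite /P; case: (k != i1); case: (k != i2); case: (k != i3).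
rewrite e2 e3.
set S1 := \sum_(j < n | P j) sin ((theta j - theta i2) / 2) * sin ((theta j - theta i3) / 2) * c j.
set S2 := \sum_(j < n | P j) sin ((theta j - theta i1) / 2) * sin ((theta j - theta i3) / 2) * c j.
set S3 := \sum_(j < n | P j) sin ((theta j - theta i1) / 2) * sin ((theta j - theta i2) / 2) * c j.
have s21 : yh i2 * xh i1 - xh i2 * yh i1 != 0.
  by rewrite (_ : yh i2 * xh i1 - xh i2 * yh i1 = - (yh i1 * xh i2 - xh i1 * yh i2)) ?oppr_eq0 //; ring.
have s32 : yh i3 * xh i2 - xh i3 * yh i2 != 0.
  by rewrite (_ : yh i3 * xh i2 - xh i3 * yh i2 = - (yh i2 * xh i3 - xh i2 * yh i3)) ?oppr_eq0 //; ring.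
have s31 : yh i3 * xh i1 - xh i3 * yh i1 != 0.
  by rewrite (_ : yh i3 * xh i1 - xh i3 * yh i1 = - (yh i1 * xh i3 - xh i1 * yh i3)) ?oppr_eq0 //; ring.
have key : \sum_(k | P k) c k * Qf k =
   S1 * (csc ((theta i1 - theta i2) / 2) * csc ((theta i1 - theta i3) / 2) * Qf i1)
 + S2 * (csc ((theta i2 - theta i1) / 2) * csc ((theta i2 - theta i3) / 2) * Qf i2)
 + S3 * (csc ((theta i3 - theta i1) / 2) * csc ((theta i3 - theta i2) / 2) * Qf i3).
  rewrite /S1 /S2 /S3 !mulr_suml -!big_split /=; apply: eq_bigr => j Pj.
  rewrite !csc_inv !Sd /Qf; field.
  by rewrite s12 s13 s21 s23 s31 s32.
rewrite key !csc_inv !Sd !Cd /Qf; field.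
by rewrite s12 s13 s21 s23 s31 s32.
Qed.
End Interp.

Lemma sq_pos_ne0 (u v w : R) : 0 < u ^+ 2 * v ^+ 2 * w ^+ 2 -> [/\ u != 0, v != 0 & w != 0].
Proof.
move=> h; split; apply/eqP => e; move: h; rewrite e expr0n /= ?mul0r ?mulr0; lra.
Qed.

Lemma cond_i_q : cond_i theta -> exists q : 'I_n -> R,
  [/\ forall k, 0 <= q k, \sum_k q k = 1, Xq q = 0 & Yq q = 0].
Proof.
move=> [i1 [i2 [i3 [[d12 d23 d13] [pos [c [cnn [f1 [f2 f3]]]]]]]]].
have [n12 n23 n31] := sq_pos_ne0 pos.
rewrite !Sd in n12 n23 n31.
have n13 : yh i1 * xh i3 - xh i1 * yh i3 != 0.
  by rewrite (_ : yh i1 * xh i3 - xh i1 * yh i3 = - (yh i3 * xh i1 - xh i3 * yh i1)) ?oppr_eq0 //; ring.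
exists (qc i1 i2 i3 c); split.
- move=> k; rewrite /qc; case: ifP => // e1; case: ifP => // e2; case: ifP => // e3.
  by apply: cnn; rewrite e1 e2 e3.
- have h := interp_id c 1 0 1 d12 d23 d13 n12 n23 n13.
  rewrite (_ : ((1:R) + 1) / 2 = 1) in h; last by field.
  rewrite -h; apply: eq_bigr => k _; rewrite /Qf; have := unit_h k.
  rewrite !mul1r mul0r addr0 => ->; by rewrite mulr1.
- have h := interp_id c 1 0 (-1) d12 d23 d13 n12 n23 n13.
  rewrite (_ : ((1:R) + -1) / 2 = 0) in h; last by field.
  rewrite /Xq; apply: (eq_trans _ h); apply: eq_bigr => k _; rewrite /Qf cosT; ring.
- have h := interp_id c 0 2 0 d12 d23 d13 n12 n23 n13.
  rewrite (_ : ((0:R) + 0) / 2 = 0) in h; last by field.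
  rewrite /Yq; apply: (eq_trans _ h); apply: eq_bigr => k _; rewrite /Qf sinT; ring.
Qed.

Lemma abs_geom (ca sa cb sb : R) : ca ^+ 2 + sa ^+ 2 = 1 -> cb ^+ 2 + sb ^+ 2 = 1 ->
  0 < sa * sb * (ca * cb + sa * sb) ->
  (ca * cb + sa * sb) ^+ 2 <= ca ^+ 2 -> (ca * cb + sa * sb) ^+ 2 <= cb ^+ 2 ->
  [/\ 0 <= cb * (sa * cb - ca * sb) * sa, 0 <= ca * (ca * sb - sa * cb) * sb,
      sa != 0, sb != 0 & sa * cb - ca * sb != 0].
Proof.
move=> ua ub H M1 M2.
have M1' : 2 * (sa * sb * ca * cb) + sa ^+ 2 * sb ^+ 2 <= ca ^+ 2 * sb ^+ 2.
  have e : ca ^+ 2 = ca ^+ 2 * (cb ^+ 2 + sb ^+ 2) by rewrite ub mulr1.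
  rewrite e in M1; nra.
have M2' : 2 * (sa * sb * ca * cb) + sa ^+ 2 * sb ^+ 2 <= sa ^+ 2 * cb ^+ 2.
  have e : cb ^+ 2 = cb ^+ 2 * (ca ^+ 2 + sa ^+ 2) by rewrite ua mulr1.
  rewrite e in M2; nra.
have H' : 0 < sa * sb * ca * cb + sa ^+ 2 * sb ^+ 2 by nra.
split.
- nra.
- nra.
- by apply/eqP => e; move: H; rewrite e !mul0r ltxx.
- by apply/eqP => e; move: H; rewrite e mulr0 mul0r ltxx.
- apply/eqP => e.
  have L : (ca * cb + sa * sb) ^+ 2 + (sa * cb - ca * sb) ^+ 2 = 1.
    rewrite (_ : (ca * cb + sa * sb) ^+ 2 + (sa * cb - ca * sb) ^+ 2 = (ca ^+ 2 + sa ^+ 2) * (cb ^+ 2 + sb ^+ 2)); last by ring.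
    by rewrite ua ub mulr1.
  rewrite e expr0n /= addr0 in L.
  have : sa ^+ 2 <= 0 by lra.
  have : 0 < sa ^+ 2 by rewrite exprn_gt0 ?lt_def //; nra.
  lra.
Qed.

Lemma sign_inv (x y z : R) : y != 0 -> z != 0 -> 0 <= x * y * z -> 0 <= x * y^-1 * z^-1.
Proof.
move=> y0 z0 h.
have -> : x * y^-1 * z^-1 = (x * y * z) * (y * z)^-2.
  rewrite expr2 invfM // -?mulf_eq0 ?y0 ?z0 //; field; by rewrite y0 z0.
apply: mulr_ge0 => //; by rewrite invr_ge0 exprn_even_ge0.
Qed.

Definition Cc k l := cos ((theta k - theta l) / 2).

Lemma zero_c_formula (i1 i2 i3 : 'I_n) :
  c_formula theta (fun _ => 0) i1 i2 i3 =
  cos ((theta i2 - theta i3) / 2) / 2 * csc ((theta i1 - theta i2) / 2) * csc ((theta i1 - theta i3) / 2).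
Proof. by rewrite /c_formula big1 ?subr0 // => j _; rewrite mulr0. Qed.

Lemma triangle_cond i j k : i != j -> i != k -> j != k ->
  (forall k l, k != l -> Cc i j ^+ 2 <= Cc k l ^+ 2) ->
  Cc i j * (cos (theta k) * (xh i * xh j - yh i * yh j) + sin (theta k) * (xh i * yh j + yh i * xh j))
    < Cc i j ^+ 2 -> cond_i theta.
Proof.
move=> dij dik djk mn H.
pose ca := xh i * xh k + yh i * yh k.
pose sa := yh i * xh k - xh i * yh k.
pose cb := xh j * xh k + yh j * yh k.
pose sb := yh j * xh k - xh j * yh k.
have uk := unit_h k.
have ua : ca ^+ 2 + sa ^+ 2 = 1.
  rewrite (_ : ca ^+ 2 + sa ^+ 2 = (xh i ^+ 2 + yh i ^+ 2) * (xh k ^+ 2 + yh k ^+ 2)); last by rewrite /ca /sa; ring.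
  by rewrite uk !unit_h mulr1.
have ub : cb ^+ 2 + sb ^+ 2 = 1.
  rewrite (_ : cb ^+ 2 + sb ^+ 2 = (xh j ^+ 2 + yh j ^+ 2) * (xh k ^+ 2 + yh k ^+ 2)); last by rewrite /cb /sb; ring.
  by rewrite uk !unit_h mulr1.
have eCij : Cc i j = ca * cb + sa * sb.
  rewrite /Cc Cd; transitivity ((xh k ^+ 2 + yh k ^+ 2) * (xh i * xh j + yh i * yh j)); first by rewrite uk mul1r.
  rewrite /ca /cb /sa /sb; ring.
have eSij : yh i * xh j - xh i * yh j = sa * cb - ca * sb.
  transitivity ((xh k ^+ 2 + yh k ^+ 2) * (yh i * xh j - xh i * yh j)); first by rewrite uk mul1r.
  rewrite /ca /cb /sa /sb; ring.
have eH : cos (theta k) * (xh i * xh j - yh i * yh j) + sin (theta k) * (xh i * yh j + yh i * xh j)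
    = ca * cb - sa * sb.
  rewrite cosT sinT /ca /cb /sa /sb; ring.
rewrite eH eCij in H.
have H' : 0 < sa * sb * (ca * cb + sa * sb) by nra.
have M1 : (ca * cb + sa * sb) ^+ 2 <= ca ^+ 2.
  by rewrite -eCij (_ : ca = Cc i k) ?mn // /Cc Cd.
have M2 : (ca * cb + sa * sb) ^+ 2 <= cb ^+ 2.
  by rewrite -eCij (_ : cb = Cc j k) ?mn // /Cc Cd.
have [g1 g2 nsa nsb nsab] := abs_geom ua ub H' M1 M2.
exists i, j, k; split; first by split.
split.
  rewrite !Sd eSij (_ : yh j * xh k - xh j * yh k = sb) // (_ : yh k * xh i - xh k * yh i = - sa); last by rewrite /sa; ring.
  rewrite sqrrN; apply: mulr_gt0; [apply: mulr_gt0|]; rewrite exprn_even_gt0 //.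
exists (fun _ => 0); split => //.
rewrite !zero_c_formula !csc_inv !Sd !Cd.
rewrite eSij -/sa -/sb -/ca -/cb.
rewrite (_ : yh j * xh i - xh j * yh i = - (sa * cb - ca * sb)); last by rewrite -eSij; ring.
rewrite (_ : yh k * xh i - xh k * yh i = - sa); last by rewrite /sa; ring.
rewrite (_ : yh k * xh j - xh k * yh j = - sb); last by rewrite /sb; ring.
rewrite (_ : xh i * xh j + yh i * yh j = ca * cb + sa * sb); last by rewrite -eCij /Cc Cd.
split; [|split].
- apply: sign_inv => //; nra.
- apply: sign_inv; rewrite ?oppr_eq0 //; nra.
- apply: sign_inv; rewrite ?oppr_eq0 //; nra.
Qed.

Lemma final_cs (c X Y U W : R) : U ^+ 2 + W ^+ 2 = 1 -> c ^+ 2 <= c * (X * U + Y * W) ->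
  c ^+ 2 <= X ^+ 2 + Y ^+ 2.
Proof.
move=> uw h.
have cs : (X * U + Y * W) ^+ 2 <= X ^+ 2 + Y ^+ 2.
  have e : X ^+ 2 + Y ^+ 2 = (X ^+ 2 + Y ^+ 2) * (U ^+ 2 + W ^+ 2) by rewrite uw mulr1.
  rewrite e; have := sqr_ge0 (X * W - Y * U).
  rewrite (_ : (X ^+ 2 + Y ^+ 2) * (U ^+ 2 + W ^+ 2) = (X * U + Y * W) ^+ 2 + (X * W - Y * U) ^+ 2); last by ring.
  lra.
have [c0|c0] := eqVneq c 0.
  rewrite c0 expr0n /=; apply: addr_ge0; exact: sqr_ge0.
have cp : 0 < c ^+ 2 by rewrite exprn_even_gt0.
have A0 : 0 <= c * (X * U + Y * W) by lra.
have : c ^+ 2 * c ^+ 2 <= c ^+ 2 * (X * U + Y * W) ^+ 2.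
  rewrite -exprMn; nra.
move=> h2.
have : c ^+ 2 * c ^+ 2 <= c ^+ 2 * (X ^+ 2 + Y ^+ 2) by nra.
rewrite ler_pM2l //.
Qed.

Lemma notcond_bound : (1 < n)%N -> ~ cond_i theta -> exists i j,
  [/\ i != j, (forall k l, k != l -> Cc i j ^+ 2 <= Cc k l ^+ 2) &
   forall q : 'I_n -> R, (forall k, 0 <= q k) -> \sum_k q k = 1 ->
     Cc i j ^+ 2 <= Xq q ^+ 2 + Yq q ^+ 2].
Proof.
move=> n1 nc.
pose i0 : 'I_n * 'I_n := (Ordinal (ltnW n1), Ordinal n1).
have Pi0 : i0.1 != i0.2 by [].
have [[i j] /= dij minp] := @arg_minP _ _ _ i0 (fun p : 'I_n * 'I_n => p.1 != p.2) (fun p : 'I_n * 'I_n => Cc p.1 p.2 ^+ 2) Pi0.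
have mn : forall k l, k != l -> Cc i j ^+ 2 <= Cc k l ^+ 2.
  by move=> k l kl; exact: (minp (k, l)).
exists i, j; split => // q q0 q1.
pose U := xh i * xh j - yh i * yh j.
pose W := xh i * yh j + yh i * xh j.
have per : forall k, Cc i j ^+ 2 <= Cc i j * (cos (theta k) * U + sin (theta k) * W).
  move=> k.
  have [->|nki] := eqVneq k i.
    rewrite (_ : cos (theta i) * U + sin (theta i) * W = Cc i j); first by rewrite expr2.
    rewrite /Cc Cd cosT sinT /U /W.
    transitivity ((xh i ^+ 2 + yh i ^+ 2) * (xh i * xh j + yh i * yh j)); first ring.
    by rewrite unit_h mul1r.
  have [->|nkj] := eqVneq k j.
    rewrite (_ : cos (theta j) * U + sin (theta j) * W = Cc i j); first by rewrite expr2.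
    rewrite /Cc Cd cosT sinT /U /W.
    transitivity ((xh j ^+ 2 + yh j ^+ 2) * (xh i * xh j + yh i * yh j)); first ring.
    by rewrite unit_h mul1r.
  rewrite leNgt; apply/negP => H; apply: nc.
  apply: (triangle_cond dij _ _ mn H); by rewrite eq_sym.
have uw : U ^+ 2 + W ^+ 2 = 1.
  rewrite (_ : U ^+ 2 + W ^+ 2 = (xh i ^+ 2 + yh i ^+ 2) * (xh j ^+ 2 + yh j ^+ 2)); last by rewrite /U /W; ring.
  by rewrite !unit_h mulr1.
apply: (final_cs uw).
have -> : Cc i j * (Xq q * U + Yq q * W) = \sum_k q k * (Cc i j * (cos (theta k) * U + sin (theta k) * W)).
  rewrite /Xq /Yq !mulr_suml -big_split mulr_sumr /=; apply: eq_bigr => k _; ring.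
rewrite -[X in X <= _]mul1r -q1 mulr_suml; apply: ler_sum => k _.
by apply: ler_wpM2l.
Qed.

Lemma real_Re (x : C) : x \is Num.real -> x = (complex.Re x)%:C.
Proof.
rewrite realE; case: x => a b /orP[]; rewrite lecE /= => /andP[/eqP e _].
  by rewrite e.
by rewrite -e.
Qed.

Lemma exists_spectral (I : finType) (rho : I -> I -> C) :
  (forall i j, rho j i = (rho i j)^*) -> exists lam u, spectral_decomp rho lam u.
Proof.
move=> herm.
pose M : 'M[C]_#|I| := \matrix_(a, b) rho (enum_val a) (enum_val b).
have hM : M \is hermsymmx.
  apply/is_hermitianmxP; rewrite expr0 scale1r; apply/matrixP => a b.
  by rewrite !mxE herm.
have nM := hermitian_normalmx hM.
have /orthomx_spectralP eM := nM.
have dreal := hermitian_spectral_diag_real hM.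
set P := spectralmx M in eM.
set d := spectral_diag M in eM dreal.
have Pu : P \is unitarymx by exact: spectral_unitarymx.
rewrite invmx_unitary // in eM.
have dR : forall c, d 0 c = (complex.Re (d 0 c))%:C.
  by move=> c; apply: real_Re; move/mxOverP: dreal; apply.
exists (fun k => complex.Re (d 0 (enum_rank k))).
exists (fun k i => (P (enum_rank k) (enum_rank i))^*).
have ridx : forall (f : 'I_#|I| -> C), \sum_c f c = \sum_(k : I) f (enum_rank k).
  move=> f; rewrite (reindex (@enum_rank I)) //; exists enum_val => x _.
    exact: enum_rankK.
  exact: enum_valK.
split.
- move=> k l; under eq_bigr do rewrite conjCK.
  have PP := elimT unitarymxP Pu.
  have := congr1 (fun A : 'M[C]_#|I| => A (enum_rank k) (enum_rank l)) PP.
  rewrite !mxE /= (inj_eq enum_rank_inj) => <-.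
  rewrite ridx; apply: eq_bigr => i _; by rewrite !mxE.
- move=> i j.
  have -> : rho i j = M (enum_rank i) (enum_rank j) by rewrite mxE !enum_rankK.
  rewrite eM mul_mx_diag !mxE ridx; apply: eq_bigr => k _.
  rewrite !mxE -dR conjCK; ring.
Qed.

Lemma conj_realC (r : R) : (r%:C)^* = r%:C.
Proof. by rewrite conjE /= oppr0. Qed.

Lemma nsq_realC (r : R) : nsq (r%:C) = r ^+ 2.
Proof. by rewrite /nsq /= expr0n /= addr0. Qed.

Lemma herm_reduced a b (phi : ('I_2 * 'I_a)%type -> C) (psi : ('I_n * 'I_b)%type -> C) i j :
  reduced_BRB (V_ctrl_phase theta) phi psi j i = (reduced_BRB (V_ctrl_phase theta) phi psi i j)^*.
Proof.
rewrite !reducedE cS'; apply: eq_bigr => x _.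
rewrite !cM !cK !PcE conj_realC; ring.
Qed.

Lemma achieve (q : 'I_n -> R) : (forall k, 0 <= q k) -> \sum_k q k = 1 ->
  exists e, achievable_ent (V_ctrl_phase theta) e /\
  exists l1 l2, [/\ 0 <= l1, 0 <= l2, l1 + l2 = 1,
    l1 * l2 = (1 - (Xq q ^+ 2 + Yq q ^+ 2)) / 4 & e = H2 l1 l2].
Proof.
move=> q0 q1.
pose phi : ('I_2 * 'I_1)%type -> C := fun _ => (Num.sqrt (1/2 : R))%:C.
pose psi : ('I_n * 'I_1)%type -> C := fun p => (Num.sqrt (q p.1))%:C.
have s2 : Num.sqrt (1/2 : R) ^+ 2 = 1/2 by rewrite sqr_sqrtr //; lra.
have hphi : unit_vec phi.
  rewrite /unit_vec (_ : \sum_k phi k * (phi k)^* = \sum_x \sum_r phi (x, r) * (phi (x, r))^*); last first.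
    by rewrite pair_bigA; apply: eq_bigr => -[].
  rewrite sum2 !big_ord1 /phi nsqE nsq_realC s2 -rCD.
  by rewrite (_ : (1/2 + 1/2 : R) = 1) ?rC1 //; lra.
have qvE : qv psi =1 q.
  by move=> y; rewrite /qv big_ord1 /psi /= nsq_realC sqr_sqrtr.
have hpsi : unit_vec psi.
  rewrite /unit_vec (_ : \sum_k psi k * (psi k)^* = \sum_y \sum_r psi (y, r) * (psi (y, r))^*); last first.
    by rewrite pair_bigA; apply: eq_bigr => -[].
  rewrite (eq_bigr (fun y => (q y)%:C)); first by rewrite -rCsum q1 rC1.
  move=> y _; rewrite big_ord1 /psi /= nsqE nsq_realC sqr_sqrtr //.
have [lam [u hsp]] := exists_spectral (herm_reduced phi psi).
exists (shannon lam); split.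
  by exists 1%N, 1%N, phi, psi; split => //; split => //; exists lam, u.
have [l1 [l2 [h1 h2 h3 h4 h5]]] := entropy_formula hphi hpsi (ex_intro _ lam (ex_intro _ u (conj hsp erefl))).
exists l1, l2; split => //.
rewrite h4 gsum_nsq.
have -> : Xq (qv psi) = Xq q by apply: eq_bigr => y _; rewrite qvE.
have -> : Yq (qv psi) = Yq q by apply: eq_bigr => y _; rewrite qvE.
have -> : pp phi ord0 = 1/2 by rewrite /pp big_ord1 /phi nsq_realC s2.
have -> : pp phi ord_max = 1/2 by rewrite /pp big_ord1 /phi nsq_realC s2.
by field.
Qed.

Lemma H2_01 : H2 0 1 = 0 :> R.
Proof. by rewrite /H2 xlog2x0 /xlog2x oner_eq0 /log2 ln1 mul0r mulr0 addr0 oppr0. Qed.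

Lemma H2_ge0 (a b : R) : 0 <= a -> 0 <= b -> a + b = 1 -> 0 <= H2 a b.
Proof.
move=> a0 b0 s; rewrite -H2_01; apply: H2_mono => //; try lra.
by rewrite mul0r mulr_ge0.
Qed.

Lemma H2_eq (a b a' b' : R) : 0 <= a -> 0 <= b -> 0 <= a' -> 0 <= b' ->
  a + b = 1 -> a' + b' = 1 -> a * b = a' * b' -> H2 a b = H2 a' b'.
Proof.
move=> *; apply/le_anti/andP; split; apply: H2_mono => //; lra.
Qed.

Lemma absc_le1 (x : R) : `|cos x| <= 1.
Proof. by rewrite ler_norml cos_le1 cos_geN1. Qed.

Lemma h_prod (c : R) : (1 - `|c|) / 2 * ((1 + `|c|) / 2) = (1 - c ^+ 2) / 4.
Proof.
rewrite -(real_normK (num_real c)); by field.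
Qed.

Lemma h_ge0 (ti tj : R) : 0 <= h_ij ti tj.
Proof.
rewrite /h_ij; have := absc_le1 ((ti - tj) / 2); have := normr_ge0 (cos ((ti - tj) / 2)).
move=> *; apply: H2_ge0; lra.
Qed.

Lemma h_sym i j : h_ij (theta j) (theta i) = h_ij (theta i) (theta j).
Proof.
by rewrite /h_ij (_ : (theta j - theta i) / 2 = - ((theta i - theta j) / 2)) ?cosN // -mulNr opprB.
Qed.

Lemma upper_data e : achievable_ent (V_ctrl_phase theta) e ->
  exists l1 l2 p0 p1 (q : 'I_n -> R),
  [/\ 0 <= l1, 0 <= l2, l1 + l2 = 1 & e = H2 l1 l2] /\
  [/\ 0 <= p0, 0 <= p1 & p0 + p1 = 1] /\
  l1 * l2 = p0 * p1 * (1 - (Xq q ^+ 2 + Yq q ^+ 2)) /\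
  (forall k, 0 <= q k) /\ \sum_k q k = 1.
Proof.
move=> [a [b [phi [psi [hphi [hpsi hvN]]]]]].
have [l1 [l2 [h1 h2 h3 h4 h5]]] := entropy_formula hphi hpsi hvN.
exists l1, l2, (pp phi ord0), (pp phi ord_max), (qv psi).
split; first by split.
split; first by split; [exact: pp_ge0 | exact: pp_ge0 | exact: pp_sum].
split; first by rewrite h4 gsum_nsq.
split; [exact: qv_ge0 | exact: qv_sum].
Qed.

Lemma cos_sq_le1 (x : R) : cos x ^+ 2 <= 1.
Proof. have := cos2Dsin2 x; have := sqr_ge0 (sin x); lra. Qed.

Lemma key_ineq (p0 p1 G c : R) : 0 <= p0 -> 0 <= p1 -> p0 + p1 = 1 -> c ^+ 2 <= G ->
  c ^+ 2 <= 1 -> p0 * p1 * (1 - G) <= (1 - c ^+ 2) / 4.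
Proof.
move=> h0 h1 s cG c1.
have pp4 : p0 * p1 <= 1/4.
  have e : p1 = 1 - p0 by lra.
  rewrite e; have := sqr_ge0 (p0 - 1/2); nra.
have pp0 : 0 <= p0 * p1 by apply: mulr_ge0.
have [G1|G1] := leP G 1.
  have : p0 * p1 * (1 - G) <= 1/4 * (1 - G) by apply: ler_wpM2r; lra.
  lra.
have : p0 * p1 * (1 - G) <= 0 by apply: mulr_ge0_le0; lra.
lra.
Qed.

Lemma pair_sum i j (F : 'I_n -> R) : i != j ->
  \sum_k (if k == i then 1/2 else if k == j then 1/2 else 0) * F k = (F i + F j) / 2.
Proof.
move=> dij; rewrite (bigD1 i) //= (bigD1 j) /=; last by rewrite eq_sym.
rewrite big1 ?addr0; last first.
  by move=> k /andP[/negPf -> /negPf ->]; rewrite mul0r.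
rewrite eqxx eq_sym (negPf dij) eqxx; lra.
Qed.


Lemma pair_G2 i j :
  ((cos (theta i) + cos (theta j)) / 2) ^+ 2 + ((sin (theta i) + sin (theta j)) / 2) ^+ 2
  = Cc i j ^+ 2.
Proof.
rewrite /Cc Cd !cosT !sinT.
have ui := unit_h i; have uj := unit_h j.
set xi := xh i; set yi := yh i; set xj := xh j; set yj := yh j.
rewrite (_ : ((xi ^+ 2 - yi ^+ 2 + (xj ^+ 2 - yj ^+ 2)) / 2) ^+ 2 +
   ((2 * xi * yi + 2 * xj * yj) / 2) ^+ 2 =
   ((xi ^+ 2 + yi ^+ 2) ^+ 2 + (xj ^+ 2 + yj ^+ 2) ^+ 2
    + 2 * (2 * (xi * xj + yi * yj) ^+ 2 - (xi ^+ 2 + yi ^+ 2) * (xj ^+ 2 + yj ^+ 2))) / 4); last by field.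
rewrite ui uj; by field.
Qed.

Definition bigM := \big[Num.max/0]_(i < n) \big[Num.max/0]_(j < n | (i < j)%N)
           h_ij (theta i) (theta j).

Lemma main_thm : (3 < n)%N ->
  (cond_i theta -> entangling_power_is (V_ctrl_phase theta) 1) /\
  (~ cond_i theta -> entangling_power_is (V_ctrl_phase theta) bigM).
Proof.
move=> n3; split.
  move=> hc; have [q [q0 q1 X0 Y0]] := cond_i_q hc.
  split.
    have [e [ach [l1 [l2 [h1 h2 h3 h4 he]]]]] := achieve q0 q1.
    suff E : H2 l1 l2 = 1 by rewrite -E -he.
    rewrite -H2_half; apply: H2_eq => //; try lra.
    by rewrite h4 X0 Y0 expr0n /= addr0 subr0; field.
  move=> e /upper_data [l1 [l2 [p0 [p1 [q' [[h1 h2 h3 ->] _]]]]]].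
  rewrite -H2_half; apply: H2_mono => //; try lra.
  have e2 : l2 = 1 - l1 by lra.
  rewrite e2; have := sqr_ge0 (l1 - 1/2); nra.
move=> nc.
have n1 : (1 < n)%N by apply: ltn_trans n3.
have [i [j [dij mn bnd]]] := notcond_bound n1 nc.
have hle : forall k l, k != l -> h_ij (theta k) (theta l) <= h_ij (theta i) (theta j).
  move=> k l kl; rewrite /h_ij.
  have := absc_le1 ((theta k - theta l) / 2); have := normr_ge0 (cos ((theta k - theta l) / 2)).
  have := absc_le1 ((theta i - theta j) / 2); have := normr_ge0 (cos ((theta i - theta j) / 2)).
  move=> *; apply: H2_mono; try lra.
  rewrite !h_prod; have := mn k l kl; rewrite /Cc; lra.
have hM : bigM = h_ij (theta i) (theta j).
  apply/le_anti/andP; split.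
    apply: bigmax_le => [|k _]; first exact: h_ge0.
    apply: bigmax_le => [|l kl]; first exact: h_ge0.
    apply: hle; by rewrite neq_ltn kl.
  have [ij|ji] := ltnP i j.
    apply: le_trans (le_bigmax _ _ i).
    exact: (le_bigmax_cond _ _ ij).
  have ji' : (j < i)%N by rewrite ltn_neqAle ji andbT eq_sym.
  rewrite -h_sym; apply: le_trans (le_bigmax _ _ j).
  exact: (le_bigmax_cond _ _ ji').
rewrite hM.
split.
  pose q := fun k => if k == i then (1/2 : R) else if k == j then 1/2 else 0.
  have q0 : forall k, 0 <= q k by move=> k; rewrite /q; case: ifP => _; [|case: ifP => _]; lra.
  have q1 : \sum_k q k = 1.
    rewrite (eq_bigr (fun k => q k * 1)); last by move=> k _; rewrite mulr1.
    rewrite pair_sum //; lra.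
  have [e [ach [l1 [l2 [h1 h2 h3 h4 he]]]]] := achieve q0 q1.
  suff E : H2 l1 l2 = h_ij (theta i) (theta j) by rewrite -E -he.
  have := absc_le1 ((theta i - theta j) / 2); have := normr_ge0 (cos ((theta i - theta j) / 2)).
  move=> *; apply: H2_eq => //; try lra.
  rewrite h4 h_prod /Xq /Yq !pair_sum // pair_G2 /Cc //.
move=> e /upper_data [l1 [l2 [p0 [p1 [q' [[h1 h2 h3 ->] [[hp0 hp1 hp] [hl [q0 q1]]]]]]]]].
have G := bnd q' q0 q1.
rewrite /h_ij.
have := absc_le1 ((theta i - theta j) / 2); have := normr_ge0 (cos ((theta i - theta j) / 2)).
move=> *; apply: H2_mono => //; try lra.
rewrite h_prod hl; apply: key_ineq => //; exact: cos_sq_le1.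
Qed.
End Main.

Unset Implicit Arguments.

Theorem theorem4 (R : realType) (n : nat) (theta : 'I_n -> R) :
  (3 < n)%N ->
  (cond_i theta -> entangling_power_is (V_ctrl_phase theta) 1) /\
  (~ cond_i theta ->
     entangling_power_is (V_ctrl_phase theta)
       (\big[Num.max/0]_(i < n) \big[Num.max/0]_(j < n | (i < j)%N)
           h_ij (theta i) (theta j))).
Proof. exact: (@main_thm R n theta). Qed.
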